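(* Let $\delta:(0,\infty)\to(0,\tfrac14)$ be a function with $\delta(\varepsilon)\to0$ as $\varepsilon\to0^+$. For every $\alpha\in(0,1)$ there exist $r=r(\alpha)>0$ and $\bar\varepsilon_2>0$ (depending only on $\alpha$ and $\delta$) such that: if $E\subseteq\mathbb{R}^2$ is convex with $B_{1-\delta(\varepsilon)}\subseteq E\subseteq B_{1+\delta(\varepsilon)}$ for some $0<\varepsilon<\bar\varepsilon_2$, then \[ \left\{y\in B_r(x):\ \frac{x-y}{|x-y|}\cdot\nu_E(x)\ge\alpha\right\}\subseteq E\qquad\text{for }\mathcal{H}^1\text{-a.e. }x\in\partial E, \] where $\nu_E(x)$ is the outer unit normal to $E$ at $x$.
   Context: $B_r(x)$ is the open ball of radius $r$ centered at $x$ in $\mathbb{R}^2$, and $B_r=B_r(0)$. For a convex set $E$ the outer unit normal $\nu_E(x)$ exists for $\mathcal{H}^1$-a.e. $x\in\partial E$. *)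

(* Defs.v *)
From mathcomp Require Import all_boot all_order all_algebra.
From mathcomp Require Import reals.
Set Implicit Arguments. Unset Strict Implicit. Unset Printing Implicit Defensive.
Import Order.TTheory GRing.Theory Num.Theory.
Local Open Scope ring_scope.

Section Defs.
Variable R : realType.
Definition pt := (R * R)%type.

Definition psub (x y : pt) : pt := (x.1 - y.1, x.2 - y.2).
Definition dot (x y : pt) : R := x.1 * y.1 + x.2 * y.2.
Definition enorm (x : pt) : R := Num.sqrt (dot x x).
Definition dist (x y : pt) : R := enorm (psub x y).

Definition ball2 (x : pt) (r : R) : pt -> Prop := fun y => dist y x < r.

Definition convex2 (E : pt -> Prop) : Prop :=
  forall x y t, E x -> E y -> 0 <= t <= 1 ->
    E ((1 - t) * x.1 + t * y.1, (1 - t) * x.2 + t * y.2).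

Definition boundary2 (E : pt -> Prop) (x : pt) : Prop :=
  forall rho : R, 0 < rho ->
    (exists y, ball2 x rho y /\ E y) /\ (exists y, ball2 x rho y /\ ~ E y).

Definition H1_null (N : pt -> Prop) : Prop :=
  forall eps : R, 0 < eps ->
    exists (C : nat -> pt -> Prop) (d : nat -> R),
      (forall x, N x -> exists n, C n x) /\
      (forall n, 0 <= d n) /\
      (forall n p q, C n p -> C n q -> dist p q <= d n) /\
      (forall m, \sum_(i < m) d i <= eps).

(* nu is the outer unit normal to the convex set E at x: the unique unit
   vector nu with (y - x) . nu <= 0 for all y in E (unique supporting
   normal; it exists at H^1-a.e. boundary point of a convex set). *)
Definition supp_normal (E : pt -> Prop) (x nu : pt) : Prop :=
  enorm nu = 1 /\ forall y, E y -> dot (psub y x) nu <= 0.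
Definition outer_normal (E : pt -> Prop) (x nu : pt) : Prop :=
  supp_normal E x nu /\ forall mu, supp_normal E x mu -> mu = nu.
End Defs.

(* Main.v *)
Require Import Defs.
From mathcomp Require Import all_boot all_order all_algebra.
From mathcomp Require Import reals.
From mathcomp.algebra_tactics Require Import ring lra.
Import Order.TTheory GRing.Theory Num.Theory.
Local Open Scope ring_scope.

Lemma small (R : realType) (u1 u2 v1 v2 A k : R) : 0 < k -> k < 1 ->
  u1 * u1 + u2 * u2 < A - k -> A <= 1 -> v1 * v1 + v2 * v2 < (k / 8)^+2 ->
  (u1 + v1) * (u1 + v1) + (u2 + v2) * (u2 + v2) < A.
Proof.
move=> hk0 hk1 hu hA hv.
have hl : (u1 * v1 + u2 * v2)^+2 <= (u1 * u1 + u2 * u2) * (v1 * v1 + v2 * v2).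
  have : 0 <= (u1 * v2 - u2 * v1)^+2 by exact: sqr_ge0.
  move=> h; have -> : (u1 * u1 + u2 * u2) * (v1 * v1 + v2 * v2) = (u1 * v1 + u2 * v2)^+2 + (u1 * v2 - u2 * v1)^+2 by ring.
  lra.
have hu0 : 0 <= u1 * u1 + u2 * u2 by nra.
have hv0 : 0 <= v1 * v1 + v2 * v2 by nra.
have h2 : (u1 * u1 + u2 * u2) * (v1 * v1 + v2 * v2) <= (k / 8)^+2.
  have : (u1 * u1 + u2 * u2) <= 1 by lra.
  nra.
have h3 : u1 * v1 + u2 * v2 <= k / 8.
  have : (u1 * v1 + u2 * v2)^+2 <= (k/8)^+2 by lra.
  have : 0 <= k / 8 by lra.
  nra.
have h4 : (k/8)^+2 <= k / 8 by nra.
nra.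
Qed.

Lemma core (R : realType) (E : pt R -> Prop) (dl al : R) (x1 x2 n1 n2 y1 y2 t : R) :
  convex2 E -> 0 < dl -> dl < 4^-1 -> dl < al^+2 / 64 -> 0 < al -> al < 1 ->
  (forall z : pt R, dot z z < (1 - dl)^+2 -> E z) ->
  x1 * x1 + x2 * x2 <= (1 + dl)^+2 ->
  (forall rho : R, 0 < rho -> exists p : pt R, E p /\
      (p.1 - x1) * (p.1 - x1) + (p.2 - x2) * (p.2 - x2) < rho^+2) ->
  n1 * n1 + n2 * n2 = 1 ->
  (forall z : pt R, E z -> (z.1 - x1) * n1 + (z.2 - x2) * n2 <= 0) ->
  0 < t -> t ^+ 2 = (x1 - y1) * (x1 - y1) + (x2 - y2) * (x2 - y2) -> t < al / 4 ->
  al * t <= (x1 - y1) * n1 + (x2 - y2) * n2 ->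
  E (y1, y2).
Proof.
move=> hc hd0 hd1 hd2 ha0 ha1 hin hx hbd hn hsup ht0 ht htr hang.
set a := 1 - dl.
have ha : 3/4 <= a by rewrite /a; lra.
have hsupin : forall s, 0 <= s -> s < a -> s <= x1 * n1 + x2 * n2.
  move=> s hs0 hsa.
  have hz : dot (s * n1, s * n2) (s * n1, s * n2) < (1 - dl)^+2.
    rewrite /dot /=. have -> : s * n1 * (s * n1) + s * n2 * (s * n2) = s^+2 by rewrite -[s^+2]mulr1 -hn; ring.
    rewrite -/a; nra.
  have := hsup _ (hin _ hz); rewrite /=. nra.
set X := x1 * n1 + x2 * n2.
have hX : a <= X.
  have hX0 : 0 <= X by apply: hsupin; lra.
  rewrite leNgt; apply/negP => hlt.
  have h1 : 0 <= (X + a) / 2 by lra.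
  have h2 : (X + a) / 2 < a by lra.
  have := hsupin _ h1 h2. rewrite -/X. lra.
have hXd : X = x1 * n1 + x2 * n2 by []. clearbody X.
have had : a = 1 - dl by []. clearbody a.
move hd1d: (x1 - y1) => d1 in ht hang.
move hd2d: (x2 - y2) => d2 in ht hang.
have hy1 : y1 = x1 - d1 by rewrite -hd1d; ring.
have hy2 : y2 = x2 - d2 by rewrite -hd2d; ring.
rewrite hy1 hy2; clear hy1 hy2 hd1d hd2d y1 y2.
pose P := - x1 * n2 + x2 * n1.
have hXP : X^+2 + P^+2 = x1 * x1 + x2 * x2.
  rewrite hXd /P -[x1 * x1 + x2 * x2]mulr1 -hn; ring.
have hP : P^+2 < al^+2 / 16.
  have : a^+2 <= X^+2 by nra.
  nra.
pose D := d1 * n1 + d2 * n2.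
pose Q := - d1 * n2 + d2 * n1.
have hDQ : D^+2 + Q^+2 = t^+2.
  rewrite ht /D /Q -[d1 * d1 + d2 * d2]mulr1 -hn; ring.
have hxd : x1 * d1 + x2 * d2 = X * D + P * Q.
  rewrite hXd /D /P /Q -[x1 * d1 + x2 * d2]mulr1 -hn; ring.
have hPQ : - (P * Q) <= al * t / 4.
  have hQ : Q^+2 <= t^+2 by nra.
  have h1 : (P * Q)^+2 <= (al * t / 4)^+2.
    rewrite exprMn.
    have -> : (al * t / 4)^+2 = (al^+2 / 16) * t^+2 by field.
    apply: ler_pM; [exact: sqr_ge0|exact: sqr_ge0|lra|exact: hQ].
  have h2 : 0 <= al * t / 4 by nra.
  nra.
have hD : al * t <= D by [].
have hat : 0 <= al * t by nra.
have hXD : 3/4 * (al * t) <= X * D.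
  have e1 : 0 <= (X - 3/4) * (al * t) by apply: mulr_ge0; lra.
  have e2 : 0 <= X * (D - al * t) by apply: mulr_ge0; lra.
  nra.
have hxdl : al * t / 2 <= x1 * d1 + x2 * d2 by lra.
clear hXD hat hD hPQ hxd hDQ hXP.
move hcd: (x1 * d1 + x2 * d2) => c in hxdl.
have hc0 : 2 * t^+2 < c by nra.
have hcp : 0 < c by nra.
pose l := t^+2 / c.
have hl0 : 0 < l by rewrite /l; apply: divr_gt0; nra.
have hl1 : l < 1/2 by rewrite /l ltr_pdivrMr //; lra.
pose k := 3 * al^+2 / 16.
have hk0 : 0 < k by rewrite /k; nra.
have hk1 : k < 1 by rewrite /k; nra.
have hrho : 0 < l * (k / 8) by apply: mulr_gt0; lra.
have [[p1 p2] [hpE hp]] := hbd _ hrho.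
rewrite /= in hp.
pose z := ((x1 - d1 - (1 - l) * p1) / l, (x2 - d2 - (1 - l) * p2) / l).
have hzE : E z.
  apply: hin; rewrite /dot /z /=.
  pose u1 := x1 - c / t^+2 * d1. pose u2 := x2 - c / t^+2 * d2.
  pose v1 := (1 - l) / l * (x1 - p1). pose v2 := (1 - l) / l * (x2 - p2).
  have hl0' : l != 0 by rewrite gt_eqF.
  have ht0' : t != 0 by rewrite gt_eqF.
  have hc0' : c != 0 by rewrite gt_eqF.
  have -> : (x1 - d1 - (1 - l) * p1) / l = u1 + v1.
    rewrite /u1 /v1 /l; field; apply/andP; split => //; rewrite expf_neq0 //.
  have -> : (x2 - d2 - (1 - l) * p2) / l = u2 + v2.
    rewrite /u2 /v2 /l; field; apply/andP; split => //; rewrite expf_neq0 //.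
  apply: (@small _ _ _ _ _ _ k) => //.
  - have -> : u1 * u1 + u2 * u2 = x1 * x1 + x2 * x2 - 2 * (c / t^+2) * (x1 * d1 + x2 * d2) + (c / t^+2)^+2 * (d1 * d1 + d2 * d2) by rewrite /u1 /u2; ring.
    rewrite hcd -ht.
    have -> : x1 * x1 + x2 * x2 - 2 * (c / t ^+ 2) * c + (c / t ^+ 2) ^+ 2 * t ^+ 2 = x1 * x1 + x2 * x2 - c^+2 / t^+2.
      by field.
    have hq : al^+2 / 4 <= c^+2 / t^+2.
      rewrite ler_pdivlMr; last by rewrite exprn_gt0.
      have hh : 0 <= al * t / 2 by nra.
      have : (al * t / 2)^+2 <= c^+2 by nra.
      have -> : (al * t / 2)^+2 = al^+2 / 4 * t^+2 by field.
      by [].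
    rewrite /k; nra.
  - nra.
  - have -> : v1 * v1 + v2 * v2 = (1 - l)^+2 * (((p1 - x1) * (p1 - x1) + (p2 - x2) * (p2 - x2)) / l^+2).
      by rewrite /v1 /v2; field.
    have hS : ((p1 - x1) * (p1 - x1) + (p2 - x2) * (p2 - x2)) / l^+2 < (k / 8)^+2.
      rewrite ltr_pdivrMr; last by rewrite exprn_gt0.
      by rewrite -exprMn (mulrC (k / 8)).
    have hS0 : 0 <= ((p1 - x1) * (p1 - x1) + (p2 - x2) * (p2 - x2)) / l^+2.
      apply: divr_ge0; last exact: sqr_ge0. by rewrite -!expr2; apply: addr_ge0; exact: sqr_ge0.
    have h1l : (1 - l)^+2 <= 1 by nra.
    nra.
have hl01 : 0 <= l <= 1 by apply/andP; split; lra.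
have := hc _ z l hpE hzE hl01.
have hl0' : l != 0 by rewrite gt_eqF.
rewrite /z /=.
have -> : (1 - l) * p1 + l * ((x1 - d1 - (1 - l) * p1) / l) = x1 - d1 by field.
have -> : (1 - l) * p2 + l * ((x2 - d2 - (1 - l) * p2) / l) = x2 - d2 by field.
by [].
Qed.

Lemma sos0 (R : realType) (a b : R) : a * a + b * b = 0 -> a = 0 /\ b = 0.
Proof.
move=> h.
have ha : 0 <= a * a by rewrite -expr2; exact: sqr_ge0.
have hb : 0 <= b * b by rewrite -expr2; exact: sqr_ge0.
have h1 : a * a = 0 by lra.
have h2 : b * b = 0 by lra.
split.
  by move: h1 => /eqP; rewrite mulf_eq0 orbb => /eqP.
by move: h2 => /eqP; rewrite mulf_eq0 orbb => /eqP.
Qed.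

Lemma sqrt_lt (R : realType) (u r : R) : 0 < r -> (Num.sqrt u < r) = (u < r^+2).
Proof.
move=> hr; by rewrite -{1}(gtr0_norm hr) -sqrtr_sqr ltr_sqrt // exprn_gt0.
Qed.

Lemma bound_x (R : realType) (x1 x2 B : R) : 0 <= B ->
  (forall rho, 0 < rho -> exists p1 p2, (p1 - x1) * (p1 - x1) + (p2 - x2) * (p2 - x2) < rho^+2
     /\ p1 * p1 + p2 * p2 < B) -> x1 * x1 + x2 * x2 <= B.
Proof.
move=> hB hp; rewrite leNgt; apply/negP => hS.
move hSd : (x1 * x1 + x2 * x2) => S in hS.
pose m := S - B.
have hm : 0 < m by rewrite /m; lra.
have hS0 : 0 < S by lra.
pose rho := m / (2 * (S + 1)).
have hrho : 0 < rho by rewrite /rho; apply: divr_gt0; lra.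
have [p1 [p2 [h1 h2]]] := hp rho hrho.
have hr : S * rho^+2 <= (m / 2)^+2.
  have -> : S * rho^+2 = (m / 2)^+2 * (S / (S + 1)^+2).
    rewrite /rho; field; lra.
  have : S / (S + 1)^+2 <= 1.
    rewrite ler_pdivrMr; last by rewrite exprn_gt0 //; lra.
    nra.
  have : 0 <= (m / 2)^+2 by exact: sqr_ge0.
  nra.
move hv1: (p1 - x1) => v1 in h1.
move hv2: (p2 - x2) => v2 in h1.
have hp1 : p1 = x1 + v1 by rewrite -hv1; ring.
have hp2 : p2 = x2 + v2 by rewrite -hv2; ring.
rewrite hp1 hp2 in h2.
have hl : (x1 * v1 + x2 * v2)^+2 <= S * (v1 * v1 + v2 * v2).
  have : 0 <= (x1 * v2 - x2 * v1)^+2 by exact: sqr_ge0.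
  rewrite -hSd.
  move=> h; have -> : (x1 * x1 + x2 * x2) * (v1 * v1 + v2 * v2) = (x1 * v1 + x2 * v2)^+2 + (x1 * v2 - x2 * v1)^+2 by ring.
  lra.
have hl2 : (x1 * v1 + x2 * v2)^+2 < (m / 2)^+2.
  have : S * (v1 * v1 + v2 * v2) < S * rho^+2 by rewrite ltr_pM2l.
  lra.
have hxv : - (m / 2) < x1 * v1 + x2 * v2.
  have : 0 < m / 2 by lra.
  nra.
have : 0 <= v1 * v1 + v2 * v2 by nra.
have : (x1 + v1) * (x1 + v1) + (x2 + v2) * (x2 + v2) = S + 2 * (x1 * v1 + x2 * v2) + (v1 * v1 + v2 * v2).
  by rewrite -hSd; ring.
rewrite /m in hxv.
lra.
Qed.

Theorem lemma3p9 (R : realType) (delta : R -> R)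
  (hdelta : forall e : R, 0 < e -> 0 < delta e < 4^-1)
  (hdelta0 : forall eta : R, 0 < eta ->
     exists kappa : R, 0 < kappa /\
       forall e : R, 0 < e -> e < kappa -> delta e < eta)
  (alpha : R) (halpha : 0 < alpha < 1) :
  exists r : R, 0 < r /\ exists eps2 : R, 0 < eps2 /\
    forall (E : pt R -> Prop) (e : R),
      convex2 E -> 0 < e -> e < eps2 ->
      (forall y, ball2 (0, 0) (1 - delta e) y -> E y) ->
      (forall y, E y -> ball2 (0, 0) (1 + delta e) y) ->
      H1_null (fun x => boundary2 E x /\
        ~ (forall nu, outer_normal E x nu ->
             forall y, ball2 x r y -> y <> x ->
               alpha <= dot (psub x y) nu / dist x y -> E y)).
Proof.
have [ha0 ha1] := andP halpha.
have heta : 0 < alpha^+2 / 64 by apply: divr_gt0; [exact: exprn_gt0|lra].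
have [kap [hk hkap]] := hdelta0 _ heta.
exists (alpha / 4); split; first lra.
exists kap; split => //.
move=> E e hconv he hek hin hout.
have /andP [hd0 hd1] := hdelta e he.
have hd2 := hkap e he hek.
have hball : forall (z : pt R) rr, 0 < rr -> ball2 (0, 0) rr z <-> dot z z < rr^+2.
  move=> [z1 z2] rr hrr; rewrite /ball2 /dist /enorm /psub /= !subr0 sqrt_lt //.
have hin' : forall z : pt R, dot z z < (1 - delta e)^+2 -> E z.
  by move=> z hz; apply: hin; apply/hball => //; lra.
move=> eps heps.
exists (fun _ _ => False), (fun _ => 0).
split; last split; last split.
- move=> [x1 x2] [hbd hnot]; exfalso; apply: hnot => [[n1 n2]] [[hnu hsupn] _] [y1 y2] hy hyx hang.
  have hn : n1 * n1 + n2 * n2 = 1.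
    move: hnu; rewrite /enorm /dot /= => h.
    have := @sqr_sqrtr _ (n1 * n1 + n2 * n2) (ltac:(nra)).
    by rewrite h expr1n.
  have hbd' : forall rho : R, 0 < rho -> exists p : pt R, E p /\
      (p.1 - x1) * (p.1 - x1) + (p.2 - x2) * (p.2 - x2) < rho^+2.
    move=> rho hrho; have [[p1 p2] [hp hE]] := (hbd rho hrho).1.
    exists (p1, p2); split => //.
    by move: hp; rewrite /ball2 /dist /enorm /psub /dot /= sqrt_lt.
  have hx : x1 * x1 + x2 * x2 <= (1 + delta e)^+2.
    apply: bound_x; first exact: sqr_ge0.
    move=> rho hrho; have [[p1 p2] [hp hE]] := (hbd rho hrho).1.
    exists p1, p2; split.
      by move: hp; rewrite /ball2 /dist /enorm /psub /dot /= sqrt_lt.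
    have := hout _ hE; rewrite hball; last lra.
    by rewrite /dot.
  pose t := dist (x1, x2) (y1, y2).
  have hdd : 0 <= (x1 - y1) * (x1 - y1) + (x2 - y2) * (x2 - y2) by rewrite -!expr2; apply: addr_ge0; exact: sqr_ge0.
  have ht2 : t ^+ 2 = (x1 - y1) * (x1 - y1) + (x2 - y2) * (x2 - y2).
    by rewrite /t /dist /enorm /psub /dot /= sqr_sqrtr.
  have hdpos : 0 < (x1 - y1) * (x1 - y1) + (x2 - y2) * (x2 - y2).
    rewrite lt_def hdd andbT; apply/negP => /eqP h0.
    apply: hyx.
    have [e1 e2] := @sos0 _ _ _ h0.
    congr (_, _); lra.
  have ht0 : 0 < t by rewrite /t /dist /enorm /psub /dot /= sqrtr_gt0.
  have htr : t < alpha / 4.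
    move: hy; rewrite /ball2 /t /dist /enorm /psub /dot /=.
    have -> : (y1 - x1) * (y1 - x1) + (y2 - x2) * (y2 - x2) = (x1 - y1) * (x1 - y1) + (x2 - y2) * (x2 - y2) by ring.
    by [].
  have hang' : alpha * t <= (x1 - y1) * n1 + (x2 - y2) * n2.
    by move: hang; rewrite -/t ler_pdivlMr.
  apply: (@core _ _ _ _ _ _ _ _ _ _ _ hconv hd0 hd1 hd2 ha0 ha1 hin' hx hbd' hn _ ht0 ht2 htr hang').
  by move=> z hz; have := hsupn z hz.
- by [].
- by [].
- move=> m; rewrite big1 //; lra.
Qed.
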